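(* Let $(S,V)$ be a complete semiring-semimodule pair, let $n\ge1$, let $\Gamma$ be an alphabet, and let $M\in (S^{n\times n})^{\Gamma^*\times\Gamma^*}$ be a pushdown transition matrix. Then for all $p\in\Gamma$ and $0\le l\le n$, $$(M^{\omega,l})_p=\sum_{p'\in\Gamma}(A_M)_{p,p'}\,(M^{\omega,l})_{p'}.$$
   Context: A complete semiring-semimodule pair $(S,V)$ (in the sense of Ésik and Kuich, ''Modern Automata Theory'') consists of a complete starsemiring $S$ (arbitrary sums with infinite associativity/commutativity/distributivity laws, star $s^*=\sum_{j\ge0}s^j$) and a complete $S$-semimodule $V$, with infinite products $\prod_{j\ge1}s_j\in V$ of sequences in $S$ satisfying the axioms of that framework. $M\in (S^{n\times n})^{\Gamma^*\times\Gamma^*}$ (a $\Gamma^*\times\Gamma^*$ matrix with $n\times n$ blocks over $S$) is a pushdown transition matrix if (i) for each $p\in\Gamma$ only finitely many blocks $M_{p,\pi}$ are nonzero, and (ii) $M_{\pi_1,\pi_2}=M_{p,\pi}$ if $\pi_1=p\pi'$, $\pi_2=\pi\pi'$ for some $p\in\Gamma$, $\pi,\pi'\in\Gamma^*$, and $0$ otherwise. $M^*=\sum_{m\ge0}M^m$ with blocks $(M^* )_{\pi,\pi'}$. Let $P_l=\{(j_1,j_2,\dots)\in\{1,\dots,n\}^\omega\mid j_t\le l\text{ for infinitely many }t\}$; $M^{\omega,l}\in (V^n)^{\Gamma^*}$ is given by $((M^{\omega,l})_\pi)_i=\sum_{\pi_1,\pi_2,\ldots\in\Gamma^*}\sum_{(j_1,j_2,\ldots)\in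 P_l}(M_{\pi,\pi_1})_{i,j_1}(M_{\pi_1,\pi_2})_{j_1,j_2}\cdots$ (sum of weights of infinite paths from $(\pi,i)$ visiting states $\le l$ infinitely often). For $p,p'\in\Gamma$, $$(A_M)_{p,p'}=\sum_{\substack{\pi=p_1\dots p_k\in\Gamma^+,\ 1\le j\le k\\ p_j=p'}}M_{p,\pi}\,(M^* )_{p_1,\epsilon}\cdots(M^* )_{p_{j-1},\epsilon}\in S^{n\times n}.$$ *)

(* Defs.v *)
From mathcomp Require Import all_boot.

Set Implicit Arguments.
Unset Strict Implicit.
Unset Printing Implicit Defensive.

(* Complete semiring: a semiring with sums csum I f of arbitrary families
   f : I -> S, satisfying the Esik--Kuich axioms: empty/one/two element
   sums, infinite associativity/commutativity (partition axiom, here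
   phrased via an arbitrary map g : I -> J whose fibres form the
   partition), and infinite distributivity on both sides. *)
Record CSemiring (S : Type) := {
  szero : S; sone : S;
  sadd : S -> S -> S; smul : S -> S -> S;
  csum : forall I : Type, (I -> S) -> S;
  saddA : forall a b c, sadd a (sadd b c) = sadd (sadd a b) c;
  saddC : forall a b, sadd a b = sadd b a;
  sadd0 : forall a, sadd szero a = a;
  smulA : forall a b c, smul a (smul b c) = smul (smul a b) c;
  smul1l : forall a, smul sone a = a;
  smul1r : forall a, smul a sone = a;
  smulDl : forall a b c, smul (sadd a b) c = sadd (smul a c) (smul b c);
  smulDr : forall a b c, smul a (sadd b c) = sadd (smul a b) (smul a c);
  smul0l : forall a, smul szero a = szero;
  smul0r : forall a, smul a szero = szero;
  csum_empty : forall (I : Type) (f : I -> S), (I -> False) -> csum f = szero;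
  csum_single : forall (I : Type) (f : I -> S) (i0 : I),
      (forall i, i = i0) -> csum f = f i0;
  csum_pair : forall f : bool -> S, csum f = sadd (f true) (f false);
  csum_partition : forall (I J : Type) (g : I -> J) (f : I -> S),
      csum f = csum (fun j : J => csum (fun x : {i : I | g i = j} => f (sval x)));
  csum_mull : forall a (I : Type) (f : I -> S),
      smul a (csum f) = csum (fun i => smul a (f i));
  csum_mulr : forall a (I : Type) (f : I -> S),
      smul (csum f) a = csum (fun i => smul (f i) a)
}.

Definition sprod S (cs : CSemiring S) (l : seq S) : S :=
  foldr (smul cs) (sone cs) l.

(* Complete S-semimodule V together with infinite products
   iprod s = prod_{j>=1} s_j in V (our sequences are indexed from 0),
   with the three Esik--Kuich axioms for infinite products. *)
Record CSemimodule S (cs : CSemiring S) (V : Type) := {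
  vzero : V;
  vadd : V -> V -> V;
  act : S -> V -> V;
  vsum : forall I : Type, (I -> V) -> V;
  iprod : (nat -> S) -> V;
  vaddA : forall a b c, vadd a (vadd b c) = vadd (vadd a b) c;
  vaddC : forall a b, vadd a b = vadd b a;
  vadd0 : forall a, vadd vzero a = a;
  actDl : forall s t v, act (sadd cs s t) v = vadd (act s v) (act t v);
  actDr : forall s v w, act s (vadd v w) = vadd (act s v) (act s w);
  actA : forall s t v, act (smul cs s t) v = act s (act t v);
  act1 : forall v, act (sone cs) v = v;
  act0l : forall v, act (szero cs) v = vzero;
  act0r : forall s, act s vzero = vzero;
  vsum_empty : forall (I : Type) (f : I -> V), (I -> False) -> vsum f = vzero;
  vsum_single : forall (I : Type) (f : I -> V) (i0 : I),
      (forall i, i = i0) -> vsum f = f i0;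
  vsum_pair : forall f : bool -> V, vsum f = vadd (f true) (f false);
  vsum_partition : forall (I J : Type) (g : I -> J) (f : I -> V),
      vsum f = vsum (fun j : J => vsum (fun x : {i : I | g i = j} => f (sval x)));
  vsum_actl : forall s (I : Type) (f : I -> V),
      act s (vsum f) = vsum (fun i => act s (f i));
  vsum_actr : forall v (I : Type) (f : I -> S),
      act (csum cs f) v = vsum (fun i => act (f i) v);
  iprod_shift : forall s : nat -> S,
      iprod s = act (s 0) (iprod (fun j => s j.+1));
  iprod_group : forall (s : nat -> S) (k : nat -> nat),
      k 0 = 0 -> (forall j, k j < k j.+1) ->
      iprod s = iprod (fun j => sprod cs (map s (iota (k j) (k j.+1 - k j))));
  iprod_sum : forall (I : nat -> Type) (f : forall j, I j -> S),
      iprod (fun j => csum cs (f j)) =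
      vsum (fun c : (forall j, I j) => iprod (fun j => f j (c j)))
}.

(* n x n matrices over S (states are 'I_n, i.e. 0..n-1 for 1..n). *)
Definition mx (S : Type) (n : nat) := 'I_n -> 'I_n -> S.

Section Matrices.
Variables (S : Type) (cs : CSemiring S) (n : nat).

Definition mx0 : mx S n := fun _ _ => szero cs.
Definition mx1 : mx S n := fun i j => if i == j then sone cs else szero cs.
Definition mxmul (A B : mx S n) : mx S n :=
  fun i j => csum cs (fun k : 'I_n => smul cs (A i k) (B k j)).

Variable (Γ : finType).

Definition pushdown_transition (M : seq Γ -> seq Γ -> mx S n) : Prop :=
  (forall p : Γ, exists s : seq (seq Γ),
      forall π, π \notin s -> forall i j, M [:: p] π i j = szero cs) /\
  (forall (p : Γ) (π π' : seq Γ), M (p :: π') (π ++ π') = M [:: p] π) /\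
  (forall π1 π2 : seq Γ,
      ~ (exists (p : Γ) (π π' : seq Γ), π1 = p :: π' /\ π2 = π ++ π') ->
      forall i j, M π1 π2 i j = szero cs).

Variable (M : seq Γ -> seq Γ -> mx S n).

Fixpoint Mpow (m : nat) : seq Γ -> seq Γ -> mx S n :=
  match m with
  | 0 => fun π π' => if π == π' then mx1 else mx0
  | m'.+1 => fun π π' i j =>
      csum cs (fun π'' : seq Γ => mxmul (M π π'') (Mpow m' π'' π') i j)
  end.

Definition Mstar (π π' : seq Γ) : mx S n :=
  fun i j => csum cs (fun m : nat => Mpow m π π' i j).

(* (A_M)_{p,p'} = sum over π = p_1..p_k in Γ^+, 1 <= j <= k, p_j = p' of
   M_{p,π} (Mstar)_{p_1,ε} ... (Mstar)_{p_{j-1},ε}; here j is 0-based (x.2). *)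
Definition A_M (p p' : Γ) : mx S n :=
  fun i j =>
    csum cs (fun x : {x : seq Γ * nat | (x.2 < size x.1) && (nth p x.1 x.2 == p')} =>
      foldl mxmul (M [:: p] (sval x).1)
            (map (fun q => Mstar [:: q] [::]) (take (sval x).2 (sval x).1)) i j).

(* P_l : state sequences visiting a state in {1..l} (0-based: < l)
   infinitely often *)
Definition P_l (l : nat) (js : nat -> 'I_n) : Prop :=
  forall N, exists t, N <= t /\ js t < l.

Variables (V : Type) (cv : CSemimodule cs V).

Definition Momega (l : nat) (π : seq Γ) : 'I_n -> V :=
  fun i =>
    vsum cv (fun ps : nat -> seq Γ =>
      vsum cv (fun js : {js : nat -> 'I_n | P_l l js} =>
        iprod cv (fun t =>
          M (if t is t'.+1 then ps t' else π) (ps t)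
            (if t is t'.+1 then sval js t' else i) (sval js t)))).

Definition mxvec (A : mx S n) (v : 'I_n -> V) : 'I_n -> V :=
  fun i => vsum cv (fun k : 'I_n => act cv (A i k) (v k)).

End Matrices.

(* Main.v *)
Require Import Defs.
From mathcomp Require Import all_boot.
From Stdlib Require Import FunctionalExtensionality ProofIrrelevance ClassicalEpsilon Lia.
From mathcomp Require Import zify.
Set Implicit Arguments.
Unset Strict Implicit.
Unset Printing Implicit Defensive.

Section VSum.
Variables (S : Type) (cs : CSemiring S) (V : Type) (cv : CSemimodule cs V).

Notation vs := (vsum cv).
Notation z := (vzero cv).

Lemma vs_ext (I : Type) (f g : I -> V) : (forall i, f i = g i) -> vs f = vs g.
Proof. by move=> h; rewrite (functional_extensionality f g h). Qed.

Lemma vs_zero (I : Type) : vs (fun _ : I => z) = z.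
Proof.
transitivity (vs (fun _ : I => act cv (szero cs) z)).
  by apply: vs_ext => _; rewrite act0l.
by rewrite -vsum_actl act0l.
Qed.

Lemma vs_zero' (I : Type) (f : I -> V) : (forall i, f i = z) -> vs f = z.
Proof. by move=> h; rewrite (vs_ext h) vs_zero. Qed.

Lemma vs_bij (I J : Type) (h : I -> J) (h' : J -> I) (f : I -> V) (g : J -> V) :
  (forall j, h (h' j) = j) -> (forall i, h' (h i) = i) ->
  (forall i, f i = g (h i)) -> vs f = vs g.
Proof.
move=> hh' h'h fg.
rewrite (vsum_partition cv h); apply: vs_ext => j.
rewrite (@vsum_single _ _ _ cv _ _ (exist (fun i => h i = j) (h' j) (hh' j))).
  by rewrite /= fg hh'.
move=> [i e].
have ei : i = h' j by rewrite -e h'h.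
subst i; congr exist; exact: proof_irrelevance.
Qed.

Lemma vs_sigT (I : Type) (J : I -> Type) (f : forall i, J i -> V) :
  vs (fun i => vs (fun j : J i => f i j)) =
  vs (fun x : {i : I & J i} => f (projT1 x) (projT2 x)).
Proof.
rewrite [RHS](vsum_partition cv (@projT1 I J)); apply: vs_ext => i.
pose h (j : J i) : {x : {i : I & J i} | projT1 x = i} :=
  exist _ (existT _ i j) erefl.
pose h' (y : {x : {i : I & J i} | projT1 x = i}) : J i :=
  match proj2_sig y in _ = i' return J i' with erefl => projT2 (proj1_sig y) end.
apply: (vs_bij (h := h) (h' := h')).
- move=> [[i' j] e] /=; subst i; by [].
- by [].
- by [].
Qed.

Lemma vs_prod (I J : Type) (f : I -> J -> V) :
  vs (fun i => vs (fun j => f i j)) = vs (fun x : I * J => f x.1 x.2).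
Proof.
rewrite vs_sigT.
apply: (vs_bij (h := fun x : {i : I & J} => (projT1 x, projT2 x))
               (h' := fun y : I * J => existT (fun _ => J) y.1 y.2)).
- by move=> [].
- by move=> [].
- by [].
Qed.

Lemma vs_exchange (I J : Type) (f : I -> J -> V) :
  vs (fun i => vs (fun j => f i j)) = vs (fun j => vs (fun i => f i j)).
Proof.
rewrite !vs_prod.
apply: (vs_bij (h := fun x : I * J => (x.2, x.1)) (h' := fun y : J * I => (y.2, y.1))).
- by move=> [].
- by move=> [].
- by [].
Qed.

Definition dec (P : Prop) : bool :=
  if excluded_middle_informative P then true else false.

Lemma decP (P : Prop) : dec P = true <-> P.
Proof. rewrite /dec; case: excluded_middle_informative => //. Qed.

Lemma vs_split (I : Type) (P : I -> Prop) (f : I -> V) :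
  vs f = vadd cv (vs (fun x : {i | P i} => f (sval x)))
                 (vs (fun x : {i | ~ P i} => f (sval x))).
Proof.
rewrite (vsum_partition cv (fun i => dec (P i))) vsum_pair; congr vadd.
- apply: (vs_bij (h := fun x : {i | dec (P i) = true} => exist P (sval x) (proj1 (decP _) (proj2_sig x)))
                 (h' := fun y : {i | P i} => exist (fun i => dec (P i) = true) (sval y) (proj2 (decP _) (proj2_sig y)))).
  + move=> [i e] /=; congr exist; exact: proof_irrelevance.
  + move=> [i e] /=; congr exist; exact: proof_irrelevance.
  + by [].
- have nP i : dec (P i) = false -> ~ P i.
    by move=> e /decP; rewrite e.
  have Pn i : ~ P i -> dec (P i) = false.
    by move=> np; case e: (dec (P i)) => //; move/decP: e.
  apply: (vs_bij (h := fun x : {i | dec (P i) = false} => exist (fun i => ~ P i) (sval x) (nP _ (proj2_sig x)))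
                 (h' := fun y : {i | ~ P i} => exist (fun i => dec (P i) = false) (sval y) (Pn _ (proj2_sig y)))).
  + move=> [i e] /=; congr exist; exact: proof_irrelevance.
  + move=> [i e] /=; congr exist; exact: proof_irrelevance.
  + by [].
Qed.

Lemma vs_restrict (I : Type) (P : I -> Prop) (f : I -> V) :
  (forall i, ~ P i -> f i = z) -> vs f = vs (fun x : {i | P i} => f (sval x)).
Proof.
move=> h; rewrite (vs_split P) (@vs_zero' _ (fun x : {i | ~ P i} => f (sval x))).
  by rewrite vaddC vadd0.
by move=> [i ni]; apply: h.
Qed.

Lemma vs_one (I : Type) (i0 : I) (f : I -> V) :
  (forall i, i <> i0 -> f i = z) -> vs f = f i0.
Proof.
move=> h; rewrite (@vs_restrict _ (fun i => i = i0)) //.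
rewrite (@vsum_single _ _ _ cv _ _ (exist (fun i => i = i0) i0 erefl)) //.
move=> [i e]; subst i; congr exist; exact: proof_irrelevance.
Qed.

Lemma vs_inj (I J : Type) (h : I -> J) (f : J -> V) :
  injective h -> (forall j, (forall i, h i <> j) -> f j = z) ->
  vs f = vs (fun i => f (h i)).
Proof.
move=> hi hz.
rewrite (@vs_restrict _ (fun j => exists i, h i = j)); last first.
  by move=> j nj; apply: hz => i e; apply: nj; exists i.
pose inv (y : {j | exists i, h i = j}) : I :=
  proj1_sig (constructive_indefinite_description _ (proj2_sig y)).
have invP y : h (inv y) = sval y.
  by rewrite /inv; case: constructive_indefinite_description.
symmetry.
apply: (vs_bij (h := fun i => exist (fun j => exists i, h i = j) (h i) (ex_intro _ i erefl)) (h' := inv)).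
- move=> [j e] /=; apply: eq_sig_hprop => /=; first by move=> ? ? ?; exact: proof_irrelevance.
  exact: (invP (exist _ j e)).
- move=> i; apply: hi; exact: (invP (exist _ (h i) _)).
- by [].
Qed.

Lemma vs_add (I : Type) (f g : I -> V) :
  vs (fun i => vadd cv (f i) (g i)) = vadd cv (vs f) (vs g).
Proof.
have -> : (fun i => vadd cv (f i) (g i)) = (fun i => vs (fun b : bool => if b then f i else g i)).
  by apply: functional_extensionality => i; rewrite vsum_pair.
rewrite vs_exchange vsum_pair //.
Qed.

Lemma vs_option (I : Type) (f : option I -> V) :
  vs f = vadd cv (f None) (vs (fun i => f (Some i))).
Proof.
rewrite (vs_split (fun o => o = None)); congr vadd.
  rewrite (@vsum_single _ _ _ cv _ _ (exist (fun o : option I => o = None) None erefl)) //.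
  move=> [i e]; subst i; congr exist; exact: proof_irrelevance.
symmetry.
pose h' (y : {o : option I | o <> None}) : I :=
  match sval y as o return o <> None -> I with
  | Some i => fun _ => i | None => fun e => False_rect _ (e erefl) end (proj2_sig y).
apply: (vs_bij (h := fun i => exist (fun o : option I => o <> None) (Some i) (fun e => ltac:(discriminate))) (h' := h')).
- move=> [[i|] e] /=; last by case: e.
  congr exist; exact: proof_irrelevance.
- by [].
- by [].
Qed.

Lemma act_vs s (I : Type) (f : I -> V) : act cv s (vs f) = vs (fun i => act cv s (f i)).
Proof. exact: vsum_actl. Qed.

End VSum.
Arguments vs_bij {S cs V} cv {I J} h h' {f g}.
Arguments vs_one {S cs V} cv {I} i0 {f}.

Definition scons {A : Type} (a : A) (f : nat -> A) : nat -> A :=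
  fun t => if t is t'.+1 then f t' else a.
Definition shiftf {A : Type} (f : nat -> A) : nat -> A := fun t => f t.+1.

Lemma scons_shift {A : Type} (f : nat -> A) : scons (f 0) (shiftf f) = f.
Proof. by apply: functional_extensionality => -[|t]. Qed.

Section Main.
Variables (S : Type) (cs : CSemiring S) (V : Type) (cv : CSemimodule cs V).
Variables (n : nat) (Γ : finType) (M : seq Γ -> seq Γ -> mx S n).
Hypothesis HM : pushdown_transition cs M.
Variable l : nat.

Notation vs := (vsum cv).
Notation z := (vzero cv).
Notation "'Φ'" := (Momega M cv l).

Definition W (π : seq Γ) (i : 'I_n) (ps : nat -> seq Γ) (js : nat -> 'I_n) : nat -> S :=
  fun t => M (scons π ps t) (ps t) (scons i js t) (js t).

Definition Path := ((nat -> seq Γ) * (nat -> 'I_n))%type.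

Definition O (R : (nat -> seq Γ) -> Prop) (π : seq Γ) (i : 'I_n) : V :=
  vs (fun x : {x : Path | R x.1 /\ P_l l x.2} => iprod cv (W π i (sval x).1 (sval x).2)).

Lemma P_l_scons (k : 'I_n) (js : nat -> 'I_n) : P_l l (scons k js) <-> P_l l js.
Proof.
split=> h N.
- have [t [Nt jt]] := h N.+1.
  case: t Nt jt => [|t] //= Nt jt; by exists t.
- have [t [Nt jt]] := h N; exists t.+1; split => //; exact: leqW.
Qed.

Lemma P_l_shift (js : nat -> 'I_n) : P_l l (shiftf js) <-> P_l l js.
Proof. have := P_l_scons (js 0) (shiftf js); rewrite scons_shift => H; tauto. Qed.

Lemma sig_eq {A : Type} (P : A -> Prop) (a b : A) (pa : P a) (pb : P b) :
  a = b -> exist P a pa = exist P b pb.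
Proof. move=> e; subst b; congr exist; exact: proof_irrelevance. Qed.

Lemma Momega_O π i : Φ π i = O (fun _ => True) π i.
Proof.
rewrite /Momega /O vs_prod.
apply: (vs_bij cv
  (fun x : (nat -> seq Γ) * {js : nat -> 'I_n | P_l l js} =>
          exist (fun x : Path => True /\ P_l l x.2) (x.1, sval x.2) (conj I (proj2_sig x.2)))
  (fun y : {x : Path | True /\ P_l l x.2} =>
          ((sval y).1, exist (fun js => P_l l js) (sval y).2 (proj2 (proj2_sig y))))).
- by move=> [[a b] [t pb]] /=; apply: sig_eq.
- by move=> [a [b pb]] /=; congr pair; apply: sig_eq.
- by [].
Qed.

Lemma O_ext (R R' : (nat -> seq Γ) -> Prop) π i :
  (forall ps, R ps <-> R' ps) -> O R π i = O R' π i.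
Proof.
move=> e.
apply: (vs_bij cv
  (fun x : {x : Path | R x.1 /\ P_l l x.2} =>
     exist (fun x : Path => R' x.1 /\ P_l l x.2) (sval x)
        (conj (proj1 (e _) (proj1 (proj2_sig x))) (proj2 (proj2_sig x))))
  (fun x : {x : Path | R' x.1 /\ P_l l x.2} =>
     exist (fun x : Path => R x.1 /\ P_l l x.2) (sval x)
        (conj (proj2 (e _) (proj1 (proj2_sig x))) (proj2 (proj2_sig x))))).
- by move=> [x px]; apply: sig_eq.
- by move=> [x px]; apply: sig_eq.
- by [].
Qed.

Lemma O_empty (R : (nat -> seq Γ) -> Prop) π i :
  (forall ps, ~ R ps) -> O R π i = z.
Proof. by move=> h; apply: vsum_empty => -[x [/h]]. Qed.

Lemma O_shift (R : (nat -> seq Γ) -> Prop) (R1 : seq Γ -> (nat -> seq Γ) -> Prop) π i :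
  (forall π' ps, R (scons π' ps) <-> R1 π' ps) ->
  O R π i = vs (fun π' => vs (fun k => act cv (M π π' i k) (O (R1 π') π' k))).
Proof.
move=> eR.
have E : forall π' k, act cv (M π π' i k) (O (R1 π') π' k) =
   vs (fun y : {x : Path | R1 π' x.1 /\ P_l l x.2} =>
         iprod cv (W π i (scons π' (sval y).1) (scons k (sval y).2))).
  move=> π' k; rewrite /O act_vs; apply: vs_ext => y.
  by rewrite [in RHS]iprod_shift.
transitivity (vs (fun π' => vs (fun k => vs (fun y : {x : Path | R1 π' x.1 /\ P_l l x.2} =>
         iprod cv (W π i (scons π' (sval y).1) (scons k (sval y).2)))))); last first.
  by apply: vs_ext => π'; apply: vs_ext => k; rewrite E.
have ex1 : forall π', vs (fun k => vs (fun y : {x : Path | R1 π' x.1 /\ P_l l x.2} =>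
         iprod cv (W π i (scons π' (sval y).1) (scons k (sval y).2)))) =
   vs (fun ky : {k : 'I_n & {x : Path | R1 π' x.1 /\ P_l l x.2}} =>
         iprod cv (W π i (scons π' (sval (projT2 ky)).1) (scons (projT1 ky) (sval (projT2 ky)).2))).
  by move=> π'; rewrite vs_sigT.
rewrite (vs_ext cv ex1) vs_sigT.
have hP : forall x : {x : Path | R x.1 /\ P_l l x.2},
    R1 ((sval x).1 0) (shiftf (sval x).1) /\ P_l l (shiftf (sval x).2).
  move=> [[a b] [ra pb]] /=; split; first by apply/eR; rewrite scons_shift.
  by apply/P_l_shift.
have hP' : forall y : {π' : seq Γ & {k : 'I_n & {x : Path | R1 π' x.1 /\ P_l l x.2}}},
    R (scons (projT1 y) (sval (projT2 (projT2 y))).1) /\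
    P_l l (scons (projT1 (projT2 y)) (sval (projT2 (projT2 y))).2).
  move=> [π' [k [[a b] [ra pb]]]] /=; split; first by apply/eR.
  by apply/P_l_scons.
apply: (vs_bij cv
  (fun x : {x : Path | R x.1 /\ P_l l x.2} =>
     existT (fun π' => {k : 'I_n & {x : Path | R1 π' x.1 /\ P_l l x.2}}) ((sval x).1 0)
       (existT (fun k => {y : Path | R1 ((sval x).1 0) y.1 /\ P_l l y.2}) ((sval x).2 0)
          (exist (fun y : Path => R1 ((sval x).1 0) y.1 /\ P_l l y.2)
             (shiftf (sval x).1, shiftf (sval x).2) (hP x))))
  (fun y => exist (fun x : Path => R x.1 /\ P_l l x.2)
            (scons (projT1 y) (sval (projT2 (projT2 y))).1,
             scons (projT1 (projT2 y)) (sval (projT2 (projT2 y))).2) (hP' y))).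
- move=> [π' [k [[a b] pr]]] /=.
  match goal with |- existT _ _ (existT _ _ (exist _ _ ?p)) = _ => rewrite (proof_irrelevance _ p pr) end.
  by [].
- move=> [[a b] pr] /=; apply: sig_eq; by rewrite !scons_shift.
- move=> [[a b] pr] /=; by rewrite !scons_shift.
Qed.


Lemma M_zero (π1 π2 : seq Γ) i j :
  ~ (exists (p : Γ) (π π' : seq Γ), π1 = p :: π' /\ π2 = π ++ π') ->
  M π1 π2 i j = szero cs.
Proof. by case: HM => _ [_ H3] h; apply: (H3 _ _ h). Qed.

Lemma M_nil (π2 : seq Γ) i j : M [::] π2 i j = szero cs.
Proof. by apply: M_zero => -[p [π [π' [e _]]]]. Qed.

Lemma catsI (s1 s2 t : seq Γ) : s1 ++ t = s2 ++ t -> s1 = s2.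
Proof.
move=> e; have sz : size s1 = size s2.
  by move/(congr1 size): e; rewrite !size_cat => /eqP; rewrite eqn_add2r => /eqP.
by move/(congr1 (take (size s1))): e; rewrite take_size_cat // take_size_cat.
Qed.

Lemma Msuffix (π π1 σ : seq Γ) i j : π <> [::] ->
  M (π ++ σ) (π1 ++ σ) i j = M π π1 i j.
Proof.
case: π => [//|p π0] _.
case: HM => _ [H2 H3].
case: (classic (exists ρ, π1 = ρ ++ π0)) => [[ρ ->]|nρ].
  by rewrite -catA /= H2 H2.
rewrite !M_zero //.
  move=> [p' [ρ [π' [[_ <-] e]]]]; apply: nρ; by exists ρ.
move=> [p' [ρ [π' [[_ <-] e]]]]; apply: nρ; exists ρ.
by apply: (@catsI _ _ σ); rewrite -catA.
Qed.

Lemma iprod_zero (s : nat -> S) t : s t = szero cs -> iprod cv s = z.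
Proof.
elim: t s => [|t IH] s st; rewrite iprod_shift.
  by rewrite st act0l.
by rewrite (IH (fun j => s j.+1)) // act0r.
Qed.

Lemma Momega_nil i : Φ [::] i = z.
Proof.
rewrite /Momega; apply: vs_zero' => ps; apply: vs_zero' => js.
by apply: (@iprod_zero _ 0); rewrite /= M_nil.
Qed.

Lemma mxvec_vs (A : mx S n) (J : Type) (f : J -> 'I_n -> V) i :
  mxvec cv A (fun k => vs (fun j => f j k)) i = vs (fun j => mxvec cv A (f j) i).
Proof.
rewrite /mxvec; under vs_ext do rewrite act_vs.
by rewrite vs_exchange.
Qed.

Lemma mxvec_zero (A : mx S n) i : mxvec cv A (fun _ => z) i = z.
Proof. by apply: vs_zero' => k; rewrite act0r. Qed.

Lemma mxvec_mxmul (A B : mx S n) v i :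
  mxvec cv (mxmul cs A B) v i = mxvec cv A (mxvec cv B v) i.
Proof.
rewrite /mxvec /mxmul.
under vs_ext do rewrite vsum_actr.
under [RHS]vs_ext do rewrite act_vs.
rewrite vs_exchange; apply: vs_ext => k; apply: vs_ext => k'.
by rewrite actA.
Qed.

Lemma mxvec_Mpow_S m (π π2 : seq Γ) v i :
  mxvec cv (Mpow cs M m.+1 π π2) v i =
  vs (fun ρ => mxvec cv (M π ρ) (mxvec cv (Mpow cs M m ρ π2) v) i).
Proof.
rewrite /mxvec /=.
under vs_ext do rewrite vsum_actr.
rewrite vs_exchange; apply: vs_ext => ρ.
have := mxvec_mxmul (M π ρ) (Mpow cs M m ρ π2) v i.
by rewrite /mxvec.
Qed.

Lemma mxvec_Mpow0 (ρ π2 : seq Γ) v k :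
  mxvec cv (Mpow cs M 0 ρ π2) v k = if ρ == π2 then v k else z.
Proof.
rewrite /mxvec /=; case: eqP => _; last first.
  by apply: vs_zero' => k'; rewrite /mx0 act0l.
rewrite (vs_one cv k).
  by rewrite /mx1 eqxx act1.
by move=> k' /eqP; rewrite /mx1 eq_sym => /negbTE ->; rewrite act0l.
Qed.

Lemma mxvec_Mstar (π π2 : seq Γ) v i :
  mxvec cv (Mstar cs M π π2) v i = vs (fun m => mxvec cv (Mpow cs M m π π2) v i).
Proof.
rewrite /mxvec /Mstar; under vs_ext do rewrite vsum_actr.
by rewrite vs_exchange.
Qed.

Lemma Momega_shift π i : Φ π i = vs (fun π' => mxvec cv (M π π') (Φ π') i).
Proof.
rewrite Momega_O (@O_shift _ (fun _ _ => True)) //.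
by apply: vs_ext => π'; apply: vs_ext => k; rewrite Momega_O.
Qed.

Lemma ex_min (P : nat -> Prop) :
  (exists t, P t) -> exists t, P t /\ forall t', t' < t -> ~ P t'.
Proof.
move=> [t Pt]; elim/ltn_ind: t Pt => t IH Pt.
case: (classic (exists t', t' < t /\ P t')) => [[t' [lt Pt']]|h].
  exact: IH t' lt Pt'.
exists t; split => // t' lt Pt'; apply: h; by exists t'.
Qed.

Lemma O_split (R Q : (nat -> seq Γ) -> Prop) π i :
  O R π i = vadd cv (O (fun ps => R ps /\ Q ps) π i) (O (fun ps => R ps /\ ~ Q ps) π i).
Proof.
rewrite /O (vs_split cv (fun x : {x : Path | R x.1 /\ P_l l x.2} => Q (sval x).1)).
congr vadd.
- apply: (vs_bij cv
    (fun y : {x : {x : Path | R x.1 /\ P_l l x.2} | Q (sval x).1} =>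
       exist (fun x : Path => (R x.1 /\ Q x.1) /\ P_l l x.2) (sval (sval y))
         (conj (conj (proj1 (proj2_sig (sval y))) (proj2_sig y)) (proj2 (proj2_sig (sval y)))))
    (fun x : {x : Path | (R x.1 /\ Q x.1) /\ P_l l x.2} =>
       exist (fun y : {x : Path | R x.1 /\ P_l l x.2} => Q (sval y).1)
         (exist (fun x : Path => R x.1 /\ P_l l x.2) (sval x)
            (conj (proj1 (proj1 (proj2_sig x))) (proj2 (proj2_sig x))))
         (proj2 (proj1 (proj2_sig x))))).
  + by move=> [x px]; apply: sig_eq.
  + by move=> [[x px] qx]; apply: sig_eq; apply: sig_eq.
  + by [].
- apply: (vs_bij cv
    (fun y : {x : {x : Path | R x.1 /\ P_l l x.2} | ~ Q (sval x).1} =>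
       exist (fun x : Path => (R x.1 /\ ~ Q x.1) /\ P_l l x.2) (sval (sval y))
         (conj (conj (proj1 (proj2_sig (sval y))) (proj2_sig y)) (proj2 (proj2_sig (sval y)))))
    (fun x : {x : Path | (R x.1 /\ ~ Q x.1) /\ P_l l x.2} =>
       exist (fun y : {x : Path | R x.1 /\ P_l l x.2} => ~ Q (sval y).1)
         (exist (fun x : Path => R x.1 /\ P_l l x.2) (sval x)
            (conj (proj1 (proj1 (proj2_sig x))) (proj2 (proj2_sig x))))
         (proj2 (proj1 (proj2_sig x))))).
  + by move=> [x px]; apply: sig_eq.
  + by move=> [[x px] qx]; apply: sig_eq; apply: sig_eq.
  + by [].
Qed.


Lemma O_zero (R : (nat -> seq Γ) -> Prop) π i :
  (forall x : Path, R x.1 -> P_l l x.2 -> iprod cv (W π i x.1 x.2) = z) ->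
  O R π i = z.
Proof. by move=> h; apply: vs_zero' => -[x [rx px]]; apply: h. Qed.

Lemma O_restrict (R Q : (nat -> seq Γ) -> Prop) π i :
  (forall x : Path, R x.1 -> P_l l x.2 -> ~ Q x.1 -> iprod cv (W π i x.1 x.2) = z) ->
  O R π i = O (fun ps => R ps /\ Q ps) π i.
Proof.
move=> h; rewrite (O_split R Q) (@O_zero (fun ps => R ps /\ ~ Q ps)).
  by rewrite vaddC vadd0.
by move=> x [rx qx] px; apply: h.
Qed.

Lemma O_partition (R : (nat -> seq Γ) -> Prop) (Rm : nat -> (nat -> seq Γ) -> Prop) π i :
  (forall ps, R ps <-> exists m, Rm m ps) ->
  (forall ps m m', Rm m ps -> Rm m' ps -> m = m') ->
  O R π i = vs (fun m => O (Rm m) π i).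
Proof.
move=> eR uR; rewrite /O vs_sigT.
pose c (x : {x : Path | R x.1 /\ P_l l x.2}) :=
  constructive_indefinite_description _ (proj1 (eR _) (proj1 (proj2_sig x))).
apply: (vs_bij cv
  (fun x : {x : Path | R x.1 /\ P_l l x.2} =>
     existT (fun m => {x : Path | Rm m x.1 /\ P_l l x.2}) (proj1_sig (c x))
       (exist (fun y : Path => Rm (proj1_sig (c x)) y.1 /\ P_l l y.2) (sval x)
          (conj (proj2_sig (c x)) (proj2 (proj2_sig x)))))
  (fun y : {m : nat & {x : Path | Rm m x.1 /\ P_l l x.2}} =>
     exist (fun x : Path => R x.1 /\ P_l l x.2) (sval (projT2 y))
       (conj (proj2 (eR _) (ex_intro _ (projT1 y) (proj1 (proj2_sig (projT2 y)))))
             (proj2 (proj2_sig (projT2 y)))))).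
- move=> [m [x [rx px]]] /=.
  rewrite /c; case: constructive_indefinite_description => m0 pm0 /=.
  have e := uR _ _ _ pm0 rx; subst m0.
  by congr existT; apply: sig_eq.
- by move=> [x px]; apply: sig_eq.
- by [].
Qed.

Lemma vs_nat (f : nat -> V) : vs f = vadd cv (f 0) (vs (fun m => f m.+1)).
Proof.
rewrite -(vs_option cv (fun o => if o is Some m then f m.+1 else f 0)).
apply: (vs_bij cv (fun m => if m is m'.+1 then Some m' else None)
                  (fun o => if o is Some m then m.+1 else 0)).
- by case.
- by case.
- by case.
Qed.

Definition Pop (σ : seq Γ) (m : nat) (ps : nat -> seq Γ) : Prop :=
  (forall t, t < m -> size σ < size (ps t)) /\ size (ps m) <= size σ.

Lemma Pop0 σ π' ps : Pop σ 0 (scons π' ps) <-> size π' <= size σ.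
Proof. by split => [[]|h]. Qed.

Lemma PopS σ m π' ps : Pop σ m.+1 (scons π' ps) <-> size σ < size π' /\ Pop σ m ps.
Proof.
split.
- move=> [h1 h2]; split; first exact: (h1 0).
  split=> // t lt; exact: (h1 t.+1).
- move=> [h0 [h1 h2]]; split => // -[|t] lt //; exact: h1.
Qed.

Lemma M_small (π σ π' : seq Γ) i k : π <> [::] -> size π' <= size σ -> π' <> σ ->
  M (π ++ σ) π' i k = szero cs.
Proof.
case: π => [//|q π0] _ sz ne; apply: M_zero => -[p [ρ [π1 [[_ e1] e2]]]].
subst π1 π'; move: sz; rewrite !size_cat => sz.
have : size ρ = 0 /\ size π0 = 0 by lia.
by case=> /size0nil e1 /size0nil e2; apply: ne; rewrite e1 e2.
Qed.

Lemma M_nonsuffix (π σ π' : seq Γ) i k : π <> [::] ->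
  (forall ρ, ρ ++ σ <> π') -> M (π ++ σ) π' i k = szero cs.
Proof.
case: π => [//|q π0] _ h; apply: M_zero => -[p [ρ [π1 [[_ e1] e2]]]].
subst π1 π'; apply: (h (ρ ++ π0)); by rewrite catA.
Qed.

Lemma Pop_eq σ m π i : π <> [::] ->
  O (Pop σ m) (π ++ σ) i = mxvec cv (Mpow cs M m.+1 π [::]) (Φ σ) i.
Proof.
elim: m π i => [|m IH] π i nπ.
- rewrite (@O_shift _ (fun π' _ => size π' <= size σ)); last by move=> *; exact: Pop0.
  have h1 : forall π', π' <> σ -> vs (fun k => act cv (M (π ++ σ) π' i k)
                 (O (fun _ => size π' <= size σ) π' k)) = z.
    move=> π' ne; apply: vs_zero' => k.
    case: (leqP (size π') (size σ)) => sz.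
      by rewrite M_small // act0l.
    rewrite O_empty ?act0r //.
  rewrite (vs_one cv σ h1).
  have h2 : forall ρ, ρ <> [::] ->
      mxvec cv (M π ρ) (mxvec cv (Mpow cs M 0 ρ [::]) (Φ σ)) i = z.
    move=> ρ ne; rewrite -[RHS](mxvec_zero (M π ρ) i); congr mxvec.
    by apply: functional_extensionality => k; rewrite mxvec_Mpow0; case: eqP.
  rewrite mxvec_Mpow_S (vs_one cv [::] h2).
  rewrite /mxvec; apply: vs_ext => k.
  have -> : O (fun _ => size σ <= size σ) σ k = Φ σ k.
    by rewrite Momega_O; apply: O_ext.
  rewrite -[X in M (π ++ σ) X](cat0s σ) Msuffix //.
  by rewrite -/(mxvec _ _ _ _) mxvec_Mpow0 eqxx.
- rewrite (@O_shift _ (fun π' ps => size σ < size π' /\ Pop σ m ps)); last first.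
    by move=> *; exact: PopS.
  have h1 : forall π', (forall ρ, ρ ++ σ <> π') -> vs (fun k => act cv (M (π ++ σ) π' i k)
                 (O (fun ps => size σ < size π' /\ Pop σ m ps) π' k)) = z.
    move=> π' h; apply: vs_zero' => k.
    by rewrite M_nonsuffix // act0l.
  have h2 : injective (fun ρ : seq Γ => ρ ++ σ) by move=> a b; apply: catsI.
  rewrite (vs_inj h2 h1).
  rewrite mxvec_Mpow_S; apply: vs_ext => ρ.
  case: (ρ =P [::]) => [->|nρ].
    have -> : mxvec cv (Mpow cs M m.+1 [::] [::]) (Φ σ) = fun _ => z.
      apply: functional_extensionality => k; rewrite mxvec_Mpow_S.
      apply: vs_zero' => ρ'; apply: vs_zero' => k'; by rewrite M_nil act0l.
    rewrite mxvec_zero; apply: vs_zero' => k.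
    rewrite O_empty ?act0r //.
    by move=> ps []; rewrite ltnn.
  rewrite /mxvec; apply: vs_ext => k; rewrite Msuffix //; congr act.
  transitivity (O (Pop σ m) (ρ ++ σ) k); last by rewrite IH.
  apply: O_ext => ps; split; first by case.
  move=> h; split => //; rewrite size_cat -[X in X < _]add0n ltn_add2r lt0n size_eq0.
  by apply/eqP.
Qed.

Definition Never (σ : seq Γ) (ps : nat -> seq Γ) : Prop := forall t, size σ < size (ps t).
Definition Gd (σ : seq Γ) (ps : nat -> seq Γ) : Prop :=
  forall t, exists ρ, ρ <> [::] /\ ps t = ρ ++ σ.
Definition NE (ps : nat -> seq Γ) : Prop := forall t, ps t <> [::].
Definition appf (σ : seq Γ) (ps : nat -> seq Γ) : nat -> seq Γ := fun t => ps t ++ σ.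
Definition tkf (σ : seq Γ) (ps : nat -> seq Γ) : nat -> seq Γ :=
  fun t => take (size (ps t) - size σ) (ps t).

Lemma tk_cat (σ ρ : seq Γ) : take (size (ρ ++ σ) - size σ) (ρ ++ σ) = ρ.
Proof. by rewrite size_cat addnK take_size_cat. Qed.

Lemma NP σ π i : π <> [::] -> O (Never σ) (π ++ σ) i = Φ π i.
Proof.
move=> nπ.
rewrite Momega_O (@O_restrict _ (Gd σ)); last first.
  move=> [ps js] /= nv _ ng.
  have EX : exists t, ~ exists ρ, ρ <> [::] /\ ps t = ρ ++ σ.
    by apply: not_all_ex_not.
  have [t0 [bt0 mt0]] := ex_min EX.
  apply: (@iprod_zero _ t0); rewrite /W.
  have [ρ0 [nρ0 e0]] : exists ρ0, ρ0 <> [::] /\ scons (π ++ σ) ps t0 = ρ0 ++ σ.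
    case: t0 bt0 mt0 => [|t'] /= bt0 mt0; first by exists π.
    by apply: NNPP; apply: mt0.
  rewrite e0 M_nonsuffix // => ρ e; apply: bt0.
  case: (ρ =P [::]) => [eρ|nρ]; last by exists ρ.
  by move: (nv t0); rewrite -e eρ /= ltnn.
rewrite [RHS](@O_restrict _ NE); last first.
  move=> [ps js] /= _ _ nne.
  have [t /NNPP bt] := not_all_ex_not _ _ nne.
  by apply: (@iprod_zero _ t.+1); rewrite /W /= bt M_nil.
symmetry; rewrite /O.
have hP : forall x : {x : Path | (True /\ NE x.1) /\ P_l l x.2},
   (Never σ (appf σ (sval x).1) /\ Gd σ (appf σ (sval x).1)) /\ P_l l (sval x).2.
  move=> [[ps js] [[_ ne] pl]] /=; split => //; split => t.
    by rewrite /appf size_cat -[X in X < _]add0n ltn_add2r lt0n size_eq0; apply/eqP.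
  by exists (ps t).
have hP' : forall y : {x : Path | (Never σ x.1 /\ Gd σ x.1) /\ P_l l x.2},
   (True /\ NE (tkf σ (sval y).1)) /\ P_l l (sval y).2.
  move=> [[ps js] [[_ gd] pl]] /=; split => //; split => // t.
  by move: (gd t) => /= [ρ [nρ e]]; rewrite /tkf /= e tk_cat.
apply: (vs_bij cv
   (fun x => exist (fun x : Path => (Never σ x.1 /\ Gd σ x.1) /\ P_l l x.2)
                   (appf σ (sval x).1, (sval x).2) (hP x))
   (fun y => exist (fun x : Path => (True /\ NE x.1) /\ P_l l x.2)
                   (tkf σ (sval y).1, (sval y).2) (hP' y))).
- move=> [[ps js] [[nv gd] pl]] /=; apply: sig_eq; congr pair.
  apply: functional_extensionality => t; rewrite /appf /tkf.
  by move: (gd t) => /= [ρ [nρ e]]; rewrite e tk_cat.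
- move=> [[ps js] pr] /=; apply: sig_eq; congr pair.
  by apply: functional_extensionality => t; rewrite /appf /tkf tk_cat.
- move=> [[ps js] [[_ ne] pl]] /=; congr iprod.
  apply: functional_extensionality => t; rewrite /W /appf.
  have -> : scons (π ++ σ) (fun t => ps t ++ σ) t = scons π ps t ++ σ by case: t.
  rewrite Msuffix //; by case: t.
Qed.

Lemma Phi_cons q σ i :
  Φ (q :: σ) i = vadd cv (Φ [:: q] i) (mxvec cv (Mstar cs M [:: q] [::]) (Φ σ) i).
Proof.
rewrite Momega_O (O_split _ (Never σ)); congr vadd.
  by rewrite -(@NP σ [:: q] i) //; apply: O_ext => ps; split => [[]|].
rewrite (@O_partition _ (Pop σ)); last first.
- move=> ps m m' [h1 h2] [h1' h2']; case: (ltngtP m m') => // lt.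
    by move: (h1' _ lt); rewrite ltnNge h2.
  by move: (h1 _ lt); rewrite ltnNge h2'.
- move=> ps; split.
    move=> [_ nn].
    have EX : exists t, ~ size σ < size (ps t) by apply: not_all_ex_not.
    have [t0 [bt0 mt0]] := ex_min EX.
    exists t0; split; last by rewrite leqNgt; apply/negP.
    by move=> t' lt; apply: NNPP; apply: mt0.
  move=> [m [h1 h2]]; split => // nv; move: (nv m); by rewrite ltnNge h2.
rewrite mxvec_Mstar [RHS]vs_nat mxvec_Mpow0 /= vadd0.
apply: vs_ext => m; exact: (@Pop_eq σ m [:: q] i).
Qed.

Fixpoint Gv (π : seq Γ) (j : nat) : 'I_n -> V :=
  match π with
  | [::] => fun _ => z
  | q :: σ => if j is j'.+1 then mxvec cv (Mstar cs M [:: q] [::]) (Gv σ j') else Φ [:: q]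
  end.

Lemma Phi_decomp π k : Φ π k = vs (fun j : 'I_(size π) => Gv π j k).
Proof.
elim: π k => [|q σ IH] k.
  by rewrite Momega_nil; symmetry; apply: vsum_empty => -[].
rewrite Phi_cons.
have -> : Φ σ = fun k' => vs (fun j : 'I_(size σ) => Gv σ j k').
  by apply: functional_extensionality => k'; rewrite IH.
rewrite mxvec_vs.
symmetry.
rewrite (vs_bij cv (fun j : 'I_(size σ).+1 => unlift ord0 j)
   (fun o : option 'I_(size σ) => if o is Some j then lift ord0 j else ord0)
   (g := fun o => if o is Some j then Gv (q :: σ) (lift ord0 j) k else Gv (q :: σ) 0 k)).
- by rewrite vs_option /=; congr vadd; apply: vs_ext => j; rewrite lift0.
- by case=> [j|]; rewrite ?liftK ?unlift_none.
- by move=> j; case: unliftP => [j' ->|->].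
- by move=> j; case: unliftP => [j' ->|->].
Qed.

Lemma mxvec_foldl (Bs : seq (mx S n)) (A : mx S n) v i :
  mxvec cv (foldl (@mxmul _ cs n) A Bs) v i =
  mxvec cv A (foldr (fun B w => mxvec cv B w) v Bs) i.
Proof.
elim: Bs A i => [|B Bs IH] A i //=.
by rewrite IH mxvec_mxmul.
Qed.

Lemma Gv_fold (p : Γ) π j : j < size π ->
  foldr (fun B w => mxvec cv B w) (Φ [:: nth p π j])
        (map (fun q => Mstar cs M [:: q] [::]) (take j π)) = Gv π j.
Proof.
elim: π j => [|q σ IH] [|j] //= lt.
by rewrite IH.
Qed.

Lemma main (p : Γ) i :
  Φ [:: p] i = vs (fun p' : Γ => mxvec cv (A_M cs M p p') (Φ [:: p']) i).
Proof.
rewrite Momega_shift.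
have E1 : forall π, mxvec cv (M [:: p] π) (Φ π) i =
    vs (fun j : 'I_(size π) => mxvec cv (M [:: p] π) (Gv π j) i).
  move=> π; rewrite -mxvec_vs; congr mxvec.
  by apply: functional_extensionality => k; rewrite Phi_decomp.
rewrite (vs_ext cv E1) vs_sigT.
have E2 : forall p', mxvec cv (A_M cs M p p') (Φ [:: p']) i =
   vs (fun x : {x : seq Γ * nat | (x.2 < size x.1) && (nth p x.1 x.2 == p')} =>
        mxvec cv (M [:: p] (sval x).1) (Gv (sval x).1 (sval x).2) i).
  move=> p'; rewrite /mxvec /A_M.
  under vs_ext do rewrite vsum_actr.
  rewrite vs_exchange; apply: vs_ext => -[[π j] /= /andP [lt /eqP e]].
  have := mxvec_foldl (map (fun q => Mstar cs M [:: q] [::]) (take j π)) (M [:: p] π) (Φ [:: p']) i.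
  rewrite /mxvec => ->; rewrite -e Gv_fold //.
rewrite [RHS](vs_ext cv E2) vs_sigT.
pose X p' := {x : seq Γ * nat | (x.2 < size x.1) && (nth p x.1 x.2 == p')}.
have hP : forall y : {π : seq Γ & 'I_(size π)},
   ((projT1 y, nat_of_ord (projT2 y)).2 < size (projT1 y, nat_of_ord (projT2 y)).1) &&
   (nth p (projT1 y, nat_of_ord (projT2 y)).1 (projT1 y, nat_of_ord (projT2 y)).2
     == nth p (projT1 y) (projT2 y)).
  by move=> [π j] /=; rewrite ltn_ord eqxx.
have hP' : forall x : {p' : Γ & X p'}, (sval (projT2 x)).2 < size (sval (projT2 x)).1.
  by move=> [p' [[π j] /= /andP []]].
symmetry.
apply: (vs_bij cv
  (fun x : {p' : Γ & X p'} => existT (fun π : seq Γ => 'I_(size π)) (sval (projT2 x)).1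
            (Ordinal (hP' x)))
  (fun y : {π : seq Γ & 'I_(size π)} => existT X (nth p (projT1 y) (projT2 y))
            (exist _ (projT1 y, nat_of_ord (projT2 y)) (hP y)))).
- by move=> [π j] /=; congr existT; apply: val_inj.
- move=> [p' [[π j] pr]] /=.
  have /andP [lt /eqP e] := pr; subst p'.
  by congr existT; apply: sig_eq.
- by [].
Qed.
End Main.

Theorem theorem6 (S : Type) (cs : CSemiring S) (V : Type) (cv : CSemimodule cs V)
  (n : nat) (hn : 0 < n) (Γ : finType) (M : seq Γ -> seq Γ -> mx S n) :
  pushdown_transition cs M ->
  forall (p : Γ) (l : nat), l <= n ->
  forall i : 'I_n,
    Momega M cv l [:: p] i =
    vsum cv (fun p' : Γ => mxvec cv (A_M cs M p p') (Momega M cv l [:: p']) i).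
Proof.
move=> HM p l _ i; exact: (main cv HM l p i).
Qed.
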